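(* Let $\mathcal{V}$ be a real, separable, infinite-dimensional Hilbert space with orthonormal basis $(e_n)_{n\ge1}$. Let $\mathcal{X}=\{v=\sum_{n\ge1}c_ne_n\in\mathcal{V}:\sum_{n\ge1}|c_n|\le1\}$ and $\mathcal{Y}=\{v\in\mathcal{V}:\|v\|\le1\}$. Then there exists a class $\mathcal{F}\subset S_1(\mathcal{V},\mathcal{V})$ such that for every $T\in\mathbb{N}$: (i) $\mathrm{Rad}_T(\mathcal{F})\ge T/2$; (ii) $\inf_{\mathcal{A}}\mathtt{R}_{\mathcal{A}}(T,\mathcal{F})\le 2+8\sqrt{T\ln(2T)}$. In particular $\mathcal{F}$ is online learnable but sequential uniform convergence fails for its squared-loss class.
   Context: $S_1(\mathcal{V},\mathcal{V})$ is the set of compact linear operators $f:\mathcal{V}\to\mathcal{V}$ whose singular values are summable (trace class). Online protocol with instance space $\mathcal{X}$ and target space $\mathcal{Y}$: for $t=1,\dots,T$, an adversary picks $(x_t,y_t)\in\mathcal{X}\times\mathcal{Y}$ and reveals $x_t$; the learner $\mathcal{A}$, using past labeled examples and $x_t$ (and possibly internal randomness), predicts $\mathcal{A}(x_t)\in\mathcal{Y}$, then $y_t$ is revealed. The regret is \[\mathtt{R}_{\mathcal{A}}(T,\mathcal{F})=\sup_{(x_1,y_1),\dots,(x_T,y_T)\in\mathcal{X}\times\mathcal{Y}}\mathbb{E}\Big[\sum_{t=1}^T\|\mathcal{A}(x_t)-y_t\|^2-\inf_{f\in\mathcal{F}}\sum_{t=1}^T\|f(x_t)-y_t\|^2\Big].\]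 Sequential Rademacher complexity: with $\sigma_1,\dots,\sigma_T$ i.i.d. uniform on $\{-1,1\}$ and $\sigma_{<t}=(\sigma_1,\dots,\sigma_{t-1})$, \[\mathrm{Rad}_T(\mathcal{F})=\sup_{x,y}\mathbb{E}_\sigma\Big[\sup_{f\in\mathcal{F}}\sum_{t=1}^T\sigma_t\|f(x_t(\sigma_{<t}))-y_t(\sigma_{<t})\|^2\Big],\] the supremum over all sequences of maps $(x_t,y_t):\{-1,1\}^{t-1}\to\mathcal{X}\times\mathcal{Y}$. *)

(* Defs.v *)
(* The real separable infinite-dimensional Hilbert
   space V is modelled as l^2(N) over a realType R, with (e_n) the standard basis. *)
From HB Require Import structures.
From mathcomp Require Import all_boot all_order all_algebra.
From mathcomp Require Import all_classical all_reals all_analysis.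
Set Implicit Arguments. Unset Strict Implicit. Unset Printing Implicit Defensive.
Import Order.TTheory GRing.Theory Num.Theory.
Import numFieldNormedType.Exports.
Local Open Scope classical_set_scope.
Local Open Scope ring_scope.

Section Defs.
Variable R : realType.

Definition vec := nat -> R.

Definition vdiff (a b : vec) : vec := fun n => a n - b n.

Definition inV (v : vec) : Prop :=
  exists M : R, forall N, \sum_(n < N) v n ^+ 2 <= M.

Definition inX (v : vec) : Prop := forall N, \sum_(n < N) `|v n| <= 1.

Definition inY (v : vec) : Prop := forall N, \sum_(n < N) v n ^+ 2 <= 1.

Definition sqnorm (v : vec) : R := limn (series (fun n => v n ^+ 2)).
Definition ip (u v : vec) : R := limn (series (fun n => u n * v n)).

Definition orthonormal (u : nat -> vec) : Prop :=
  (forall i, inV (u i)) /\ (forall i j, ip (u i) (u j) = (i == j)%:R).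

(* S_1(V,V): compact operators with summable singular values, given by their
   Schmidt (singular value) decomposition f v = sum_k s_k <v,u_k> w_k,
   s_k >= 0 summable, (u_k), (w_k) orthonormal.  Only the action on V matters. *)
Definition trace_class (f : vec -> vec) : Prop :=
  exists (s : nat -> R) (u w : nat -> vec),
    (forall k, 0 <= s k) /\
    (exists M : R, forall N, \sum_(k < N) s k <= M) /\
    orthonormal u /\ orthonormal w /\
    (forall v, inV v -> forall m,
        f v m = limn (series (fun k => s k * ip v (u k) * w k m))).

(* A (possibly randomized) online learner: internal randomness is a probability
   space (Omega, P); given the history of past labeled examples and the current
   instance, it predicts a point of Y. *)
Record learner := Learner {
  l_disp : measure_display;
  l_Omega : measurableType l_disp;
  l_P : probability l_Omega R;
  l_A : l_Omega -> seq (vec * vec) -> vec -> vec;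
  l_inY : forall w h x, inY (l_A w h x);
  l_meas : forall h x y,
      measurable_fun setT (fun w => sqnorm (vdiff (l_A w h x) y))
}.

(* history (x_1,y_1),...,(x_{t-1},y_{t-1}) (0-indexed rounds 0..t-1) *)
Definition hist (xs ys : nat -> vec) (t : nat) : seq (vec * vec) :=
  [seq (xs i, ys i) | i <- iota 0 t].

Definition learner_loss (L : learner) (T : nat) (xs ys : nat -> vec)
  (w : l_Omega L) : R :=
  \sum_(t < T) sqnorm (vdiff (l_A w (hist xs ys t) (xs t)) (ys t)).

Definition class_loss (f : vec -> vec) (T : nat) (xs ys : nat -> vec) : R :=
  \sum_(t < T) sqnorm (vdiff (f (xs t)) (ys t)).

Definition valid_seq (T : nat) (xy : (nat -> vec) * (nat -> vec)) : Prop :=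
  forall t, (t < T)%N -> inX (xy.1 t) /\ inY (xy.2 t).

Definition regret (L : learner) (T : nat) (F : set (vec -> vec)) : \bar R :=
  ereal_sup [set ((\int[l_P L]_w (@learner_loss L T xy.1 xy.2 w)%:E)
                  - ereal_inf [set (class_loss f T xy.1 xy.2)%:E | f in F])%E
            | xy in valid_seq T].

Definition sgn (b : bool) : R := if b then 1 else -1.

(* a tree: (x_t(sigma_{<t}), y_t(sigma_{<t})) = (x (take t s), y (take t s)) *)
Definition valid_tree (xy : (seq bool -> vec) * (seq bool -> vec)) : Prop :=
  forall s, inX (xy.1 s) /\ inY (xy.2 s).

Definition rad_inner (F : set (vec -> vec)) (T : nat)
  (xy : (seq bool -> vec) * (seq bool -> vec)) (s : T.-tuple bool) : \bar R :=
  ereal_sup [set (\sum_(t < T) sgn (tnth s t) *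
       sqnorm (vdiff (f (xy.1 (take t s))) (xy.2 (take t s))))%:E | f in F].

Definition Rad (F : set (vec -> vec)) (T : nat) : \bar R :=
  ereal_sup [set ((2 ^- T : R)%:E * \sum_(s : T.-tuple bool) rad_inner F xy s)%E
            | xy in valid_tree].

End Defs.

(* Main.v *)
Require Import Defs.
From HB Require Import structures.
From mathcomp Require Import all_boot all_order all_algebra.
From mathcomp Require Import all_classical all_reals all_analysis.
From mathcomp Require Import ring lra.
Import Order.TTheory GRing.Theory Num.Theory.
Import numFieldNormedType.Exports.
Local Open Scope classical_set_scope.
Local Open Scope ring_scope.
Set Implicit Arguments. Unset Strict Implicit. Unset Printing Implicit Defensive.

Section Aux.
Variable R : realType.
Implicit Types (u : nat -> R).

Lemma series_fin u N : (forall k, (N <= k)%N -> u k = 0) ->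
  forall n, (N <= n)%N -> series u n = \sum_(k < N) u k.
Proof.
move=> u0 n Nn; rewrite seriesEnat /= (big_cat_nat (leq0n N) Nn) /=.
rewrite [X in _ + X]big_nat_cond [X in _ + X]big1 ?addr0 ?big_mkord //.
by move=> k /andP[/andP[Nk _] _]; rewrite u0.
Qed.

Lemma cvg_series_fin u N : (forall k, (N <= k)%N -> u k = 0) ->
  cvgn (series u).
Proof.
move=> u0; apply: (is_cvg_near_cst (\sum_(k < N) u k)).
by near=> n; apply: series_fin => //; near: n; exact: nbhs_infty_ge.
Unshelve. all: by end_near.
Qed.

Lemma lim_series_fin u N : (forall k, (N <= k)%N -> u k = 0) ->
  limn (series u) = \sum_(k < N) u k.
Proof.
move=> u0; apply: lim_near_cst => //.
by near=> n; apply: series_fin => //; near: n; exact: nbhs_infty_ge.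
Unshelve. all: by end_near.
Qed.

Definition sqs (y : vec R) := series (fun n => y n ^+ 2).

Lemma sqs_nd (y : vec R) : {homo sqs y : n m / (n <= m)%N >-> n <= m}.
Proof.
move=> n m nm; rewrite /sqs !seriesEnat /= (big_cat_nat (leq0n n) nm) /=.
by rewrite lerDl; apply: sumr_ge0 => i _; exact: sqr_ge0.
Qed.

Lemma inY_cvg (y : vec R) : inY y -> cvgn (sqs y).
Proof.
move=> Y; apply/cvg_ex; eexists; apply: nondecreasing_cvgn; first exact: sqs_nd.
exists 1 => _ [n _ <-]; rewrite /sqs seriesEnat /= big_mkord; exact: Y.
Qed.

Lemma sqnorm_le1 (y : vec R) : inY y -> sqnorm y <= 1.
Proof.
move=> Y; apply: limr_le; first exact: inY_cvg.
by near=> n; rewrite seriesEnat /= big_mkord; exact: Y.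
Unshelve. all: by end_near.
Qed.

Lemma sqnorm_ge_part (y : vec R) N : inY y -> \sum_(i < N) y i ^+ 2 <= sqnorm y.
Proof.
move=> Y; have := nondecreasing_cvgn_le (sqs_nd y) (inY_cvg Y) N.
by rewrite /sqs seriesEnat /= big_mkord.
Qed.

Lemma sqnorm_ge0 (y : vec R) : inY y -> 0 <= sqnorm y.
Proof. by move=> Y; apply: le_trans (sqnorm_ge_part 0 Y); rewrite big_ord0. Qed.

Lemma loss_fin (d y : vec R) M : (forall i, (M <= i)%N -> d i = 0) -> inY y ->
  sqnorm (vdiff d y) = sqnorm y + \sum_(i < M) (d i ^+ 2 - 2 * d i * y i).
Proof.
move=> d0 Y; rewrite /sqnorm.
have -> : (fun n => vdiff d y n ^+ 2) =
  (fun n => y n ^+ 2) + (fun n => d n ^+ 2 - 2 * d n * y n).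
  by apply: funext => n /=; rewrite /vdiff !fctE; ring.
rewrite seriesD limD.
- by rewrite [X in _ + X](lim_series_fin (N := M)) // => k Mk; rewrite d0 //; ring.
- exact: inY_cvg.
- by apply: (cvg_series_fin (N := M)) => k Mk; rewrite d0 //; ring.
Qed.


Lemma nF : (false%:R : R) = 0. Proof. by []. Qed.
Lemma nT : (true%:R : R) = 1. Proof. by []. Qed.

Lemma sum_single (f : nat -> R) (P : pred nat) n0 N :
  (forall n, n != n0 -> f n = 0) ->
  \sum_(n < N | P n) f n = if (n0 < N)%N && P n0 then f n0 else 0.
Proof.
move=> f0; case: ifP => [/andP[n0N Pn0]|H].
  rewrite (bigD1 (Ordinal n0N)) //= big1 ?addr0 // => i /andP[_ ni].
  by apply: f0; apply: contra ni => /eqP ni; apply/eqP/val_inj.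
rewrite big1 // => i Pi; apply: f0; apply/eqP => ni.
by move: H; rewrite -ni ltn_ord Pi.
Qed.

Lemma sum_single1 (f : nat -> R) n0 N :
  (forall n, n != n0 -> f n = 0) ->
  \sum_(n < N) f n = if (n0 < N)%N then f n0 else 0.
Proof. by move=> H; have := @sum_single f xpredT n0 N H; rewrite andbT. Qed.

Lemma lim_series1 (u : nat -> R) k0 : (forall k, k != k0 -> u k = 0) ->
  limn (series u) = u k0.
Proof.
move=> u0; rewrite (lim_series_fin (N := k0.+1)).
  by rewrite (@sum_single1 u k0 k0.+1 u0) ltnSn.
by move=> k kk; apply: u0; rewrite neq_ltn ltnNge kk orbT.
Qed.

Definition ev (j : nat) : vec R := fun i => (i == j)%:R.
Definition ds (n : nat) : seq bool := odflt [::] (unpickle n).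
Definition sbit (n k : nat) : bool := nth false (ds n) k.
Definition sz n := size (ds n).
Definition qq (n k : nat) : nat := pickle (n, k).
Definition Mn n := (\max_(k < sz n) (qq n k).+1)%N.
Definition chi (n i : nat) : bool :=
  match @pickle_inv (nat * nat)%type i with
  | Some (m, k) => (m == n) && sbit n k | None => false end.
Definition kof (i : nat) : nat :=
  match @pickle_inv (nat * nat)%type i with Some (_, k) => k | None => 0%N end.
Definition lift (n : nat) (v : vec R) : vec R := fun i => (chi n i)%:R * v (kof i).

Lemma sbit_sz n k : sbit n k -> (k < sz n)%N.
Proof. by rewrite /sbit /sz; case: ltnP => // H; rewrite nth_default. Qed.

Lemma qq_lt n k : (k < sz n)%N -> (qq n k < Mn n)%N.
Proof. by move=> kn; rewrite /Mn; exact: (leq_bigmax (Ordinal kn)). Qed.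

Lemma chiE n i : chi n i -> exists k, i = qq n k /\ sbit n k.
Proof.
rewrite /chi; case E: pickle_inv => [[m k]|] //= /andP[/eqP mn sb].
by exists k; split => //; rewrite /qq -mn -(@pickle_invK (nat * nat)%type i) E.
Qed.

Lemma chi_lt n i : chi n i -> (i < Mn n)%N.
Proof. by case/chiE => k [-> sb]; apply: qq_lt; exact: sbit_sz. Qed.

Lemma chi_qq n k : chi n (qq n k) = sbit n k.
Proof. by rewrite /chi /qq pickleK_inv eqxx. Qed.

Lemma kof_qq n k : kof (qq n k) = k.
Proof. by rewrite /kof /qq pickleK_inv. Qed.

Lemma chi_uniq n m i : chi n i -> chi m i -> n = m.
Proof. by rewrite /chi; case: pickle_inv => [[a k]|] // /andP[/eqP<- _] /andP[/eqP<- _]. Qed.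

Lemma chi_ge n i : (Mn n <= i)%N -> chi n i = false.
Proof. by move=> H; apply/negP => /chi_lt; rewrite ltnNge H. Qed.

Lemma lift_ge n v i : (Mn n <= i)%N -> lift n v i = 0.
Proof. by move=> H; rewrite /lift chi_ge // mul0r. Qed.

Lemma sum_chi n (h : nat -> R) M : (Mn n <= M)%N ->
  \sum_(i < M) (chi n i)%:R * h i = \sum_(k < sz n) (sbit n k)%:R * h (qq n k).
Proof.
move=> MM.
have E : forall i : 'I_M, (chi n i)%:R * h i =
    \sum_(k < sz n) ((i == qq n k :> nat)%:R * ((sbit n k)%:R * h (qq n k))).
  move=> i; case C: (chi n i).
    have [k [ik sb]] := chiE C.
    have kn := sbit_sz sb.
    rewrite (@sum_single1 (fun k => (i == qq n k :> nat)%:R * ((sbit n k)%:R * h (qq n k))) k) ?kn /= ?ik ?eqxx ?sb ?nT ?mul1r //.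
    move=> k' kk; case: eqP => [E|]; last by rewrite nF mul0r.
    by move: kk; rewrite /qq in E; move/(pcan_inj (@pickleK_inv (nat*nat)%type)): E => [->]; rewrite eqxx.
  rewrite nF mul0r big1 // => k _.
  case: eqP => [ik|]; last by rewrite nF mul0r.
  by move: C; rewrite ik chi_qq => ->; rewrite nF !mul0r mulr0.
under eq_bigr do rewrite E.
rewrite exchange_big /=.
apply: eq_bigr => k _; rewrite -mulr_suml.
case sb: (sbit n k); last by rewrite nF !mul0r mulr0.
have kM : (qq n k < M)%N by apply: leq_trans MM; apply: qq_lt; exact: sbit_sz.
rewrite (@sum_single1 (fun i => (i == qq n k)%:R) (qq n k)) ?kM ?eqxx ?nT ?mul1r //.
by move=> i ni; rewrite (negbTE ni).
Qed.

Lemma psum_mono (u : nat -> R) N N' : (forall k, 0 <= u k) -> (N <= N')%N ->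
  \sum_(k < N) u k <= \sum_(k < N') u k.
Proof.
move=> u0 NN; rewrite -!(big_mkord xpredT) (big_cat_nat (leq0n N) NN) /=.
by rewrite lerDl; apply: sumr_ge0 => i _.
Qed.

Lemma psum_supp (u : nat -> R) M N : (forall k, (M <= k)%N -> u k = 0) ->
  (M <= N)%N -> \sum_(k < N) u k = \sum_(k < M) u k.
Proof. by move=> u0 MN; have := series_fin u0 MN; rewrite seriesEnat /= big_mkord. Qed.

Lemma ip_ev (v : vec R) k : ip v (ev k) = v k.
Proof.
rewrite /ip (@lim_series1 (fun i => v i * ev k i) k) /ev ?eqxx ?nT ?mulr1 //.
by move=> j jk; rewrite (negbTE jk) nF mulr0.
Qed.

Lemma ev_inV k : inV (ev k).
Proof.
exists 1 => N; rewrite (@sum_single1 (fun n => ev k n ^+ 2) k).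
  by case: ifP => _ //; rewrite /ev eqxx nT expr1n.
by move=> n nk; rewrite /ev (negbTE nk) nF expr0n.
Qed.

Lemma ip_evev i j : ip (ev i) (ev j) = (i == j)%:R.
Proof.
rewrite /ip (@lim_series1 (fun n => ev i n * ev j n) i) /ev ?eqxx ?nT ?mul1r //.
by move=> n ni; rewrite (negbTE ni) nF mul0r.
Qed.

Lemma qq_inj n : injective (qq n).
Proof. by move=> i j /(pcan_inj (@pickleK_inv (nat*nat)%type)) [->]. Qed.

Lemma lift_tc n : trace_class (lift n).
Proof.
exists (fun k => (sbit n k)%:R), ev, (fun k => ev (qq n k)).
split; first by move=> k; exact: ler0n.
split.
  exists (sz n)%:R => N.
  apply: (le_trans (@psum_mono (fun k => (sbit n k)%:R) N (N + sz n) _ _)).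
  - by move=> k; exact: ler0n.
  - exact: leq_addr.
  rewrite (@psum_supp (fun k => (sbit n k)%:R) (sz n) (N + sz n)) ?leq_addl //; last first.
    by move=> k kn; case sb: (sbit n k) => //; move: (sbit_sz sb); rewrite ltnNge kn.
  apply: le_trans (_ : \sum_(k < sz n) (1 : R) <= _).
    by apply: ler_sum => k _; case: (sbit n k).
  by rewrite sumr_const card_ord.
split; first by split => [i|i j]; [exact: ev_inV|exact: ip_evev].
split; first by split => [i|i j]; [exact: ev_inV|rewrite ip_evev (inj_eq (@qq_inj n))].
move=> v _ m.
have -> : (fun k => (sbit n k)%:R * ip v (ev k) * ev (qq n k) m) =
          (fun k => (sbit n k)%:R * v k * ev (qq n k) m).
  by apply: funext => k; rewrite ip_ev.
rewrite /lift; case C: (chi n m).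
  have [k [mk sb]] := chiE C; subst m.
  rewrite (@lim_series1 _ k).
    by rewrite kof_qq /ev ?eqxx ?sb ?nT ?mul1r ?mulr1.
  by move=> k' kk; rewrite /ev (inj_eq (@qq_inj n)) eq_sym (negbTE kk) nF mulr0.
rewrite nF mul0r (@lim_series_fin _ 0) ?big_ord0 // => k _.
rewrite /ev; case: eqP => [mk|]; last by rewrite nF mulr0.
by move: C; rewrite mk chi_qq => ->; rewrite nF !mul0r.
Qed.

Lemma sqnorm0 : sqnorm (fun _ : nat => (0 : R)) = 0.
Proof. by rewrite /sqnorm (@lim_series_fin _ 0) ?big_ord0 // => k _; rewrite expr0n. Qed.

Lemma inY0 : inY (fun _ : nat => (0 : R)).
Proof. by move=> N; rewrite big1 // => i _; rewrite expr0n. Qed.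

Lemma lift_sq n v i : lift n v i ^+ 2 = (chi n i)%:R * v (kof i) ^+ 2.
Proof. by rewrite /lift; case: (chi n i); rewrite ?nT ?nF ?mul1r ?mul0r ?expr0n. Qed.

Lemma sqnorm_lift_ev n t : sqnorm (vdiff (lift n (ev t)) (fun _ => 0)) = (sbit n t)%:R.
Proof.
rewrite (@loss_fin (lift n (ev t)) (fun _ => 0) (Mn n) (fun i => @lift_ge n (ev t) i) inY0).
rewrite sqnorm0 add0r.
under eq_bigr do rewrite mulr0 subr0 lift_sq.
rewrite (@sum_chi n (fun i => ev t (kof i) ^+ 2)) //.
under eq_bigr do rewrite kof_qq.
rewrite (@sum_single1 (fun k => (sbit n k)%:R * ev t k ^+ 2) t).
  case: ifP => tn; first by rewrite /ev eqxx nT expr1n mulr1.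
  by case sb: (sbit n t) => //; move: (sbit_sz sb); rewrite tn.
by move=> k kt; rewrite /ev (negbTE kt) nF expr0n mulr0.
Qed.


Definition FF : set (vec R -> vec R) := [set f | exists n, f = lift n].
Definition xyR : (seq bool -> vec R) * (seq bool -> vec R) :=
  (fun s => ev (size s), fun _ => (fun _ => 0)).

Lemma xyR_valid : valid_tree xyR.
Proof.
move=> s; split => /=; last exact: inY0.
move=> N; rewrite (@sum_single1 (fun i => `|ev (size s) i|) (size s)).
  by case: ifP => _; rewrite /ev ?eqxx ?nT ?normr1 ?normr0.
by move=> i ni; rewrite /ev (negbTE ni) nF normr0.
Qed.

Lemma count_sum T : \sum_(s : T.-tuple bool) \sum_(t < T) ((tnth s t)%:R : R)
   = T%:R * 2 ^+ T / 2.
Proof.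
set S := LHS.
have negS : S = \sum_(s : T.-tuple bool) \sum_(t < T) ((~~ tnth s t)%:R : R).
  rewrite /S (reindex_inj (h := fun s : T.-tuple bool => [tuple of map negb s])).
    by apply: eq_bigr => s _; apply: eq_bigr => t _; rewrite tnth_map.
  move=> s1 s2 /(congr1 val) /= E; apply: val_inj => /=.
  by rewrite -(mapK negbK s1) E mapK //; exact: negbK.
have SS : S + S = T%:R * 2 ^+ T.
  rewrite {2}negS /S -big_split /=.
  rewrite (eq_bigr (fun _ => T%:R)); last first.
    move=> s _; rewrite -big_split /=.
    rewrite (eq_bigr (fun _ => 1)) ?sumr_const ?card_ord //.
    by move=> t _; case: (tnth s t); rewrite /= ?nT ?nF ?addr0 ?add0r.
  by rewrite sumr_const card_tuple card_bool -[in RHS]natrX mulr_natr.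

by rewrite -SS; field.
Qed.

Lemma Rad_lb T : ((T%:R / 2 : R)%:E <= Rad FF T)%E.
Proof.
apply: le_trans; last first.
  apply: ereal_sup_ubound; exists xyR; first exact: xyR_valid.
  reflexivity.
have H : forall s : T.-tuple bool,
    ((\sum_(t < T) ((tnth s t)%:R : R))%:E <= rad_inner FF xyR s)%E.
  move=> s; apply: ereal_sup_ubound; exists (lift (pickle (val s))).
    by exists (pickle (val s)).
  congr EFin; apply: eq_bigr => t _ /=.
  rewrite size_take size_tuple ltn_ord sqnorm_lift_ev /sbit /ds pickleK /= -tnth_nth.
  by case: (tnth s t); rewrite /sgn ?nT ?nF ?mulr1 ?mulr0.
apply: le_trans (lee_wpmul2l _ (lee_sum _ (fun s _ => H s))).
  rewrite sumEFin -EFinM lee_fin count_sum.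
  by rewrite le_eqVlt; apply/orP; left; apply/eqP; field.
by rewrite lee_fin invr_ge0 exprn_ge0.
Qed.


Definition zv : vec R := fun _ => 0.
Definition en n (y : vec R) := \sum_(i < Mn n) (chi n i)%:R * y i ^+ 2.
Definition hE n (h : seq (vec R * vec R)) := \sum_(p <- h) en n p.2.
Definition hact n h : bool := 1 <= hE n h.
Definition ok n (x : vec R) : bool := \sum_(i < Mn n) lift n x i ^+ 2 <= 1.
Definition gx n x : vec R := if ok n x then lift n x else zv.
Definition hpred n h x : vec R := if hact n h then gx n x else zv.
Definition lossv (p y : vec R) := sqnorm (vdiff p y).
Definition hL n (h : seq (vec R * vec R)) :=
  \sum_(r < size h) lossv (hpred n (take r h) (nth (zv, zv) h r).1) (nth (zv, zv) h r).2.
Definition hLZ (h : seq (vec R * vec R)) := \sum_(p <- h) lossv zv p.2.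
Definition nof (i : nat) : nat :=
  match @pickle_inv (nat * nat)%type i with Some (m, _) => m | None => 0%N end.

Lemma chi_nof n i : chi n i -> n = nof i.
Proof. by rewrite /chi /nof; case: pickle_inv => [[m k]|] // /andP[/eqP-> _]. Qed.

Lemma gx_chi n x i : ~~ chi n i -> gx n x i = 0.
Proof. by move=> C; rewrite /gx; case: ok => //; rewrite /lift (negbTE C) nF mul0r. Qed.

Lemma gx_ge n x i : (Mn n <= i)%N -> gx n x i = 0.
Proof. by move=> H; apply: gx_chi; rewrite chi_ge. Qed.

Lemma gx_sq_le1 n x N : \sum_(i < N) gx n x i ^+ 2 <= 1.
Proof.
rewrite /gx; case O: (ok n x); last by rewrite big1 // => i _; rewrite expr0n.
apply: le_trans (@psum_mono (fun i => lift n x i ^+ 2) N (N + Mn n) _ _) _.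
- by move=> k; exact: sqr_ge0.
- exact: leq_addr.
rewrite (@psum_supp (fun i => lift n x i ^+ 2) (Mn n)) ?leq_addl //.
by move=> k kk; rewrite lift_ge // expr0n.
Qed.

Lemma sum_sq_single (f : nat -> R) (P : pred nat) n0 N :
  (forall n, n != n0 -> f n = 0) ->
  (\sum_(n < N | P n) f n) ^+ 2 = \sum_(n < N | P n) f n ^+ 2.
Proof.
move=> f0; rewrite (@sum_single f P n0 N f0) (@sum_single (fun n => f n ^+ 2) P n0 N).
  by case: ifP => _ //; rewrite expr0n.
by move=> n nn; rewrite f0 // expr0n.
Qed.

Section Learner.
Variables (K : nat) (eta : R).

Definition hw n h := expR (- eta * hL n h).
Definition hwZ h := expR (- eta * hLZ h).
Definition Nb h := xget 0%N [set M | forall n, hact n h -> (n < M)%N].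
Definition hcnt h := (\sum_(n < Nb h | hact n h) 1)%N.
Definition Phi h := hwZ h * (K.+1 - hcnt h)%:R + \sum_(n < Nb h | hact n h) hw n h.
Definition lpred h x : vec R :=
  fun i => \sum_(n < Nb h | hact n h) (hw n h / Phi h) * gx n x i.

Lemma Phi_ge_sum h : \sum_(n < Nb h | hact n h) hw n h <= Phi h.
Proof.
rewrite /Phi lerDr; apply: mulr_ge0; [exact: ltW (expR_gt0 _)|exact: ler0n].
Qed.

Lemma Phi_ge0 h : 0 <= Phi h.
Proof.
apply: le_trans (Phi_ge_sum h); apply: sumr_ge0 => n _; exact: ltW (expR_gt0 _).
Qed.

Lemma alpha_ge0 n h : 0 <= hw n h / Phi h.
Proof. by apply: divr_ge0; [exact: ltW (expR_gt0 _)|exact: Phi_ge0]. Qed.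

Lemma alpha_sum_le1 h : \sum_(n < Nb h | hact n h) hw n h / Phi h <= 1.
Proof.
rewrite -mulr_suml; have [->|P0] := eqVneq (Phi h) 0; first by rewrite invr0 mulr0.
have Pp : 0 < Phi h by rewrite lt_def P0 Phi_ge0.
by rewrite ler_pdivrMr // mul1r Phi_ge_sum.
Qed.


Lemma lpred_inY h x : inY (lpred h x).
Proof.
move=> N.
have E : forall i, lpred h x i ^+ 2 =
    \sum_(n < Nb h | hact n h) (hw n h / Phi h) ^+ 2 * gx n x i ^+ 2.
  move=> i; rewrite /lpred (@sum_sq_single (fun n => hw n h / Phi h * gx n x i) (fun n => hact n h) (nof i) (Nb h)).
    by apply: eq_bigr => n _; rewrite exprMn.
  move=> n nn; rewrite gx_chi ?mulr0 //; apply: contra nn => C.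
  by rewrite (chi_nof C).
under eq_bigr do rewrite E.
rewrite exchange_big /=.
apply: le_trans (alpha_sum_le1 h); apply: ler_sum => n Pn.
rewrite -mulr_sumr; apply: le_trans (_ : (hw n h / Phi h) ^+ 2 * 1 <= _).
  apply: ler_wpM2l; [exact: sqr_ge0|exact: gx_sq_le1].
rewrite mulr1 expr2 ler_piMr ?alpha_ge0 //.
apply: le_trans (alpha_sum_le1 h).
rewrite (bigD1 n) //= lerDl; apply: sumr_ge0 => j _; exact: alpha_ge0.
Qed.

End Learner.


Lemma hE_rcons n h p : hE n (rcons h p) = hE n h + en n p.2.
Proof. by rewrite /hE big_rcons. Qed.

Lemma hLZ_rcons h p : hLZ (rcons h p) = hLZ h + lossv zv p.2.
Proof. by rewrite /hLZ big_rcons. Qed.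

Lemma hL_rcons n h p : hL n (rcons h p) = hL n h + lossv (hpred n h p.1) p.2.
Proof.
rewrite /hL size_rcons big_ord_recr /=; congr (_ + _).
  apply: eq_bigr => r _ /=; have rh := ltn_ord r.
  by rewrite -cats1 takel_cat ?(ltnW rh) // nth_cat rh.
by rewrite -cats1 take_size_cat // nth_cat ltnn subnn.
Qed.

Lemma en_ge0 n y : 0 <= en n y.
Proof. by apply: sumr_ge0 => i _; apply: mulr_ge0; [exact: ler0n|exact: sqr_ge0]. Qed.

Lemma hact_rcons n h p : hact n h -> hact n (rcons h p).
Proof. by rewrite /hact hE_rcons => H; apply: le_trans H _; rewrite lerDl en_ge0. Qed.

Lemma hL_inact n h : ~~ hact n h -> hL n h = hLZ h.
Proof.
elim/last_ind: h => [|h p IH] H; first by rewrite /hL /hLZ big_ord0 big_nil.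
have H' : ~~ hact n h by apply: contra H; exact: hact_rcons.
by rewrite hL_rcons hLZ_rcons IH // /hpred (negbTE H').
Qed.

Lemma hist_succ (xs ys : nat -> vec R) t :
  hist xs ys t.+1 = rcons (hist xs ys t) (xs t, ys t).
Proof. by rewrite /hist -addn1 iotaD map_cat cats1. Qed.

Lemma sum_bound_indep (P : pred nat) (F : nat -> R) M1 M2 :
  (forall n, P n -> (n < M1)%N) -> (forall n, P n -> (n < M2)%N) ->
  \sum_(n < M1 | P n) F n = \sum_(n < M2 | P n) F n.
Proof.
move=> B1 B2; rewrite big_mkcond [RHS]big_mkcond /=.
have G : forall M, (forall n, P n -> (n < M)%N) -> forall k, (M <= k)%N ->
    (if P k then F k else 0) = 0.
  by move=> M B k Mk; case: ifP => // /B; rewrite ltnNge Mk.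
have [M12|M21] := leqP M1 M2.
  by rewrite (@psum_supp (fun k => if P k then F k else 0) M1 M2 (G _ B1) M12).
by rewrite (@psum_supp (fun k => if P k then F k else 0) M2 M1 (G _ B2) (ltnW M21)).
Qed.


Section Analysis.
Variables (T : nat) (xs ys : nat -> vec R).
Hypothesis Hv : valid_seq T (xs, ys).
Local Notation H t := (hist xs ys t).

Lemma validX s : (s < T)%N -> inX (xs s).
Proof. by case/Hv. Qed.
Lemma validY s : (s < T)%N -> inY (ys s).
Proof. by case/Hv. Qed.

Lemma hE_hist n t : hE n (H t) = \sum_(s < t) en n (ys s).
Proof.
elim: t => [|t IH]; first by rewrite /hE /hist big_nil big_ord0.
by rewrite hist_succ hE_rcons IH big_ord_recr.
Qed.

Lemma hLZ_hist t : hLZ (H t) = \sum_(s < t) lossv zv (ys s).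
Proof.
elim: t => [|t IH]; first by rewrite /hLZ /hist big_nil big_ord0.
by rewrite hist_succ hLZ_rcons IH big_ord_recr.
Qed.

Lemma hL_hist n t : hL n (H t) = \sum_(s < t) lossv (hpred n (H s) (xs s)) (ys s).
Proof.
elim: t => [|t IH]; first by rewrite /hL /hist /= !big_ord0.
by rewrite hist_succ hL_rcons IH big_ord_recr.
Qed.

Lemma en_le_sq n y M : (Mn n <= M)%N -> en n y = \sum_(i < M) (chi n i)%:R * y i ^+ 2.
Proof.
move=> MM; rewrite /en (@psum_supp (fun i => (chi n i)%:R * y i ^+ 2) (Mn n) M) //.
by move=> k kk; rewrite chi_ge // nF mul0r.
Qed.

Lemma en_sum_le1 y N (P : pred nat) : inY y -> \sum_(n < N | P n) en n y <= 1.
Proof.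
move=> Y; set B := (\max_(n < N) Mn n)%N.
have HB : forall n : 'I_N, (Mn n <= B)%N by move=> n; exact: (leq_bigmax n).
under eq_bigr => n _ do rewrite (en_le_sq _ (HB n)).
rewrite exchange_big /=; apply: le_trans (Y B); apply: ler_sum => i _.
rewrite -mulr_suml; apply: ler_piMl; first exact: sqr_ge0.
rewrite (@sum_single (fun n => (chi n i)%:R) P (nof i) N).
  by case: ifP => _ //; case: (chi _ _).
by move=> n nn; case C: (chi n i) => //; move: nn; rewrite (chi_nof C) eqxx.
Qed.

Lemma en_le1 n y : inY y -> en n y <= 1.
Proof.
move=> Y; have := @en_sum_le1 y n.+1 (pred1 n) Y.
by rewrite (big_pred1 (Ordinal (ltnSn n))) //= => i; rewrite /= -val_eqE.
Qed.

Lemma cnt_le t M : (t <= T)%N -> \sum_(n < M | hact n (H t)) (1 : R) <= t%:R.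
Proof.
move=> tT; apply: (@le_trans _ _ (\sum_(n < M | hact n (H t)) hE n (H t))).
  by apply: ler_sum => n Hn; exact: Hn.
under eq_bigr do rewrite hE_hist.
rewrite exchange_big /=; apply: (@le_trans _ _ (\sum_(s < t) (1 : R))).
  apply: ler_sum => s _; apply: (@en_sum_le1 (ys s) M (fun n => hact n (H t))); apply: validY.
  exact: leq_trans (ltn_ord s) tT.
by rewrite sumr_const card_ord.
Qed.


Lemma hE_mono n t t' : (t <= t')%N -> hE n (H t) <= hE n (H t').
Proof.
move=> tt; rewrite !hE_hist.
by apply: (@psum_mono (fun s => en n (ys s))) => // k; exact: en_ge0.
Qed.

Lemma hact_mono n t t' : (t <= t')%N -> hact n (H t) -> hact n (H t').
Proof. by move=> tt; rewrite /hact => A; apply: le_trans A (hE_mono n tt). Qed.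

Lemma cnt_mono (P : pred nat) M M' : (M <= M')%N ->
  \sum_(n < M | P n) (1 : R) <= \sum_(n < M' | P n) (1 : R).
Proof.
move=> MM; rewrite big_mkcond [X in _ <= X]big_mkcond /=.
by apply: (@psum_mono (fun n => if P n then 1 else 0)) => // k; case: ifP.
Qed.

Lemma bounded_act t : (t <= T)%N -> exists M, forall n, hact n (H t) -> (n < M)%N.
Proof.
move=> tT; case: (pselect (exists M, forall n, hact n (H t) -> (n < M)%N)) => // NB.
exfalso.
have step : forall j : nat, exists M, j%:R <= \sum_(n < M | hact n (H t)) (1 : R).
  elim => [|j [M HM]]; first by exists 0%N; rewrite big_ord0.
  have [n [Mn Hn]] : exists n, (M <= n)%N /\ hact n (H t).
    apply: contrapT => C; apply: NB; exists M => n Hn.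
    by rewrite ltnNge; apply/negP => Mn; apply: C; exists n.
  exists n.+1; rewrite big_mkcond big_ord_recr /= Hn -big_mkcond -natr1 lerD2r.
  by apply: le_trans HM _; apply: (@cnt_mono (fun k => hact k (H t))).
have [M HM] := step t.+1.
have := le_trans HM (cnt_le M tT).
by rewrite ler_nat ltnn.
Qed.

Variables (K : nat) (eta : R).
Hypothesis TK : (T <= K)%N.
Hypothesis eta0 : 0 <= eta.

Let MT := Nb (H T).

Lemma MT_bound t : (t <= T)%N -> forall n, hact n (H t) -> (n < MT)%N.
Proof.
move=> tT n A; have := @xgetPex _ 0%N [set M | forall n, hact n (H T) -> (n < M)%N].
by move=> /(_ (bounded_act (leqnn T))); apply; exact: hact_mono A.
Qed.

Lemma Nb_bound t : (t <= T)%N -> forall n, hact n (H t) -> (n < Nb (H t))%N.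
Proof.
move=> tT; apply: (@xgetPex _ 0%N [set M | forall n, hact n (H t) -> (n < M)%N]).
by exists MT; exact: MT_bound.
Qed.

Lemma sum_MT t (F : nat -> R) : (t <= T)%N ->
  \sum_(n < Nb (H t) | hact n (H t)) F n = \sum_(n < MT | hact n (H t)) F n.
Proof.
move=> tT; apply: (@sum_bound_indep (fun n => hact n (H t))).
- exact: Nb_bound.
- exact: MT_bound.
Qed.

Lemma cnt_MT t : (t <= T)%N ->
  (hcnt (H t))%:R = \sum_(n < MT | hact n (H t)) (1 : R).
Proof. by move=> tT; rewrite /hcnt natr_sum (sum_MT (fun _ => 1) tT). Qed.

Lemma cnt_leK t : (t <= T)%N -> (hcnt (H t) <= K)%N.
Proof.
move=> tT; rewrite -(ler_nat R) cnt_MT //; apply: le_trans (cnt_le MT tT) _.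
by rewrite ler_nat (leq_trans tT TK).
Qed.

Lemma lossv_bounds (d y : vec R) M : (forall i, (M <= i)%N -> d i = 0) ->
  \sum_(i < M) d i ^+ 2 <= 1 -> inY y -> 0 <= lossv d y <= 4.
Proof.
move=> d0 d1 Y; rewrite /lossv (loss_fin d0 Y).
have S0 := sqnorm_ge_part M Y; have S1 := sqnorm_le1 Y.
apply/andP; split.
  apply: le_trans (_ : \sum_(i < M) (d i - y i) ^+ 2 <= _).
    by apply: sumr_ge0 => i _; exact: sqr_ge0.
  have -> : \sum_(i < M) (d i - y i) ^+ 2 =
    \sum_(i < M) y i ^+ 2 + \sum_(i < M) (d i ^+ 2 - 2 * d i * y i).
    by rewrite -big_split /=; apply: eq_bigr => i _; ring.
  by rewrite lerD2r.
have H : \sum_(i < M) (d i ^+ 2 - 2 * d i * y i) <=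
       2 * \sum_(i < M) d i ^+ 2 + \sum_(i < M) y i ^+ 2.
  rewrite mulr_sumr -big_split /=.
  apply: ler_sum => i _; have := sqr_ge0 (d i + y i); nra.
have := Y M; lra.
Qed.

Lemma lossv_zv y : inY y -> lossv zv y = sqnorm y.
Proof. by move=> Y; rewrite /lossv (@loss_fin zv y 0) // big_ord0 addr0. Qed.

Lemma lossv_gx n x y : inY y -> 0 <= lossv (gx n x) y <= 4.
Proof.
move=> Y; apply: (@lossv_bounds (gx n x) y (Mn n)) => //; first exact: gx_ge.
exact: gx_sq_le1.
Qed.

Lemma expN_le (x : R) : 0 <= x -> expR (- x) <= 1 - x + x ^+ 2.
Proof.
move=> x0; rewrite expRN.
apply: le_trans (_ : (1 + x)^-1 <= _).
  rewrite lef_pV2 ?posrE ?expR_gt0 ?expR_ge1Dx //; lra.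
have x1 : 0 < 1 + x by lra.
rewrite -[(1 + x)^-1]mul1r ler_pdivrMr //; nra.
Qed.

Lemma hedge1 beta l : 0 <= beta -> 0 <= l <= 4 ->
  beta * expR (- eta * l) <= beta * (1 - eta * l + 16 * eta ^+ 2).
Proof.
move=> b0 /andP[l0 l4]; apply: ler_wpM2l => //.
rewrite mulNr; apply: le_trans (expN_le (mulr_ge0 eta0 l0)) _.
rewrite lerD2l exprMn; have : l ^+ 2 <= 16 by nra.
by move=> H; rewrite mulrC ler_wpM2r // sqr_ge0.
Qed.

Lemma budget (d : nat -> R) t : (forall s, (s < t)%N -> 0 <= d s <= 1) ->
  \sum_(s < t) (if 1 <= \sum_(r < s) d r then 0 else d s) <= 2 /\
  \sum_(s < t) (if 1 <= \sum_(r < s) d r then 0 else d s) <= \sum_(r < t) d r.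
Proof.
elim: t => [|t IH] H0; first by rewrite !big_ord0; split => //; lra.
have [|IH1 IH2] := IH; first by move=> s st; apply: H0; exact: ltnW.
have /andP[d0 d1] := H0 t (ltnSn t).
rewrite !big_ord_recr /=; case: ifP => A.
  by rewrite addr0; split => //; lra.
move/negbT: A; rewrite -ltNge => A; split; lra.
Qed.

Lemma ok_X m x : inX x -> ok m x.
Proof.
move=> X; rewrite /ok; under eq_bigr do rewrite lift_sq.
rewrite (@sum_chi m (fun i => x (kof i) ^+ 2)) //.
under eq_bigr do rewrite kof_qq.
apply: le_trans (X (sz m)); apply: ler_sum => k _.
have xk1 : `|x k| <= 1.
  apply: le_trans (X k.+1); rewrite big_ord_recr /= lerDr.
  by apply: sumr_ge0 => i _.
case: (sbit m k); rewrite ?nT ?nF ?mul1r ?mul0r //.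
by rewrite -real_normK ?num_real // expr2 ler_piMr.
Qed.

Lemma zv_lift m x y : inY y -> lossv zv y <= lossv (lift m x) y + en m y.
Proof.
move=> Y; rewrite (lossv_zv Y) /lossv (@loss_fin (lift m x) y (Mn m)) //; last first.
  by move=> i; exact: lift_ge.
rewrite /en -addrA lerDl -big_split /=; apply: sumr_ge0 => i _.
rewrite /lift; case: (chi m i); rewrite ?nT ?nF ?mul1r ?mul0r.
  by have := sqr_ge0 (x (kof i) - y i); nra.
by rewrite expr0n mulr0 mul0r subr0 addr0.
Qed.

Lemma hw_rcons n h p :
  hw eta n (rcons h p) = hw eta n h * expR (- eta * lossv (hpred n h p.1) p.2).
Proof. by rewrite /hw hL_rcons mulrDr expRD. Qed.

Lemma hwZ_rcons h p : hwZ eta (rcons h p) = hwZ eta h * expR (- eta * lossv zv p.2).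
Proof. by rewrite /hwZ hLZ_rcons mulrDr expRD. Qed.

Lemma PhiE t : (t <= T)%N -> Phi K eta (H t) =
  hwZ eta (H t) * (K.+1 - hcnt (H t))%:R + \sum_(n < MT | hact n (H t)) hw eta n (H t).
Proof. by move=> tT; rewrite /Phi (sum_MT (fun n => hw eta n (H t)) tT). Qed.

Lemma cZ_ge1 t : (t <= T)%N -> 1 <= ((K.+1 - hcnt (H t))%:R : R).
Proof. by move=> tT; rewrite ler1n subn_gt0 ltnS cnt_leK. Qed.

Lemma Phi_pos t : (t <= T)%N -> 0 < Phi K eta (H t).
Proof.
move=> tT; rewrite (PhiE tT); apply: ltr_pwDl.
  by apply: mulr_gt0; [exact: expR_gt0|apply: lt_le_trans (cZ_ge1 tT)].
by apply: sumr_ge0 => n _; exact: ltW (expR_gt0 _).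
Qed.

Lemma hw_le_Phi t (n : 'I_MT) : (t <= T)%N -> hact n (H t) ->
  hw eta n (H t) <= Phi K eta (H t).
Proof.
move=> tT A; rewrite (PhiE tT); apply: le_trans (_ : \sum_(n < MT | hact n (H t)) hw eta n (H t) <= _).
  rewrite (bigD1 n) //= lerDl; apply: sumr_ge0 => j _; exact: ltW (expR_gt0 _).
rewrite lerDr; apply: mulr_ge0; [exact: ltW (expR_gt0 _)|exact: ler0n].
Qed.

Lemma convex_step t : (t < T)%N ->
  Phi K eta (H t) * lossv (lpred K eta (H t) (xs t)) (ys t) <=
  hwZ eta (H t) * (K.+1 - hcnt (H t))%:R * lossv zv (ys t) +
  \sum_(n < MT | hact n (H t)) hw eta n (H t) * lossv (gx n (xs t)) (ys t).
Proof.
move=> tT; have tT' := ltnW tT.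
have Y : inY (ys t) := validY tT.
set B := (\max_(n < MT) Mn n)%N.
have HB : forall n : 'I_MT, (Mn n <= B)%N := fun n => leq_bigmax n.
set Ph := Phi K eta (H t).
have Pp : 0 < Ph := Phi_pos tT'.
pose a n := hw eta n (H t) / Ph.
have lpE : forall i, lpred K eta (H t) (xs t) i = \sum_(n < MT | hact n (H t)) a n * gx n (xs t) i.
  by move=> i; rewrite /lpred (sum_MT (fun n => hw eta n (H t) / Phi K eta (H t) * gx n (xs t) i) tT').
have lp0 : forall i, (B <= i)%N -> lpred K eta (H t) (xs t) i = 0.
  move=> i Bi; rewrite lpE big1 // => n _.
  by rewrite gx_ge ?mulr0 //; exact: leq_trans (HB n) Bi.
rewrite [lossv (lpred _ _ _ _) _]/lossv (loss_fin lp0 Y) (lossv_zv Y).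
have gE : forall n : 'I_MT, lossv (gx n (xs t)) (ys t) =
    sqnorm (ys t) + \sum_(i < B) (gx n (xs t) i ^+ 2 - 2 * gx n (xs t) i * (ys t) i).
  move=> n; apply: loss_fin Y => i Bi; apply: gx_ge; exact: leq_trans (HB n) Bi.
under [X in _ <= _ + X]eq_bigr => n _ do rewrite gE.
set S := sqnorm (ys t).
have PhE : Ph = hwZ eta (H t) * (K.+1 - hcnt (H t))%:R + \sum_(n < MT | hact n (H t)) hw eta n (H t).
  exact: PhiE.
have pw : forall i, lpred K eta (H t) (xs t) i ^+ 2 - 2 * lpred K eta (H t) (xs t) i * (ys t) i =
    \sum_(n < MT | hact n (H t)) (a n ^+ 2 * gx n (xs t) i ^+ 2 - 2 * a n * gx n (xs t) i * (ys t) i).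
  move=> i; rewrite sumrB lpE.
  rewrite (@sum_sq_single (fun n => a n * gx n (xs t) i) (fun n => hact n (H t)) (nof i) MT).
    rewrite mulr_sumr mulr_suml; congr (_ - _); apply: eq_bigr => n _.
      by rewrite exprMn.
    by rewrite !mulrA.
  move=> n nn; rewrite gx_chi ?mulr0 //; apply: contra nn => C.
  by rewrite (chi_nof C).
suff KEY : Ph * \sum_(i < B) (lpred K eta (H t) (xs t) i ^+ 2 - 2 * lpred K eta (H t) (xs t) i * (ys t) i) <=
    \sum_(n < MT | hact n (H t)) hw eta n (H t) * \sum_(i < B) (gx n (xs t) i ^+ 2 - 2 * gx n (xs t) i * (ys t) i).
  have -> : \sum_(n < MT | hact n (H t)) hw eta n (H t) * (S + \sum_(i < B) (gx n (xs t) i ^+ 2 - 2 * gx n (xs t) i * (ys t) i))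
    = (\sum_(n < MT | hact n (H t)) hw eta n (H t)) * S +
      \sum_(n < MT | hact n (H t)) hw eta n (H t) * \sum_(i < B) (gx n (xs t) i ^+ 2 - 2 * gx n (xs t) i * (ys t) i).
    by rewrite mulr_suml -big_split /=; apply: eq_bigr => n _; rewrite mulrDr.
  rewrite mulrDr {1}PhE; lra.
under eq_bigr do rewrite pw.
rewrite mulr_sumr; under eq_bigr do rewrite mulr_sumr.
rewrite exchange_big /=.
apply: ler_sum => n A; rewrite mulr_sumr; apply: ler_sum => i _.
have a0 : 0 <= a n by apply: divr_ge0; [exact: ltW (expR_gt0 _)|exact: ltW].
have a1 : a n <= 1 by rewrite ler_pdivrMr // mul1r; exact: hw_le_Phi.
have Pa : Ph * a n = hw eta n (H t) by rewrite /a mulrCA divff ?mulr1 // gt_eqF.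
have w0 : 0 <= hw eta n (H t) by exact: ltW (expR_gt0 _).
have g2 := sqr_ge0 (gx n (xs t) i).
have -> : Ph * (a n ^+ 2 * gx n (xs t) i ^+ 2 - 2 * a n * gx n (xs t) i * (ys t) i) =
  hw eta n (H t) * (a n * gx n (xs t) i ^+ 2 - 2 * gx n (xs t) i * (ys t) i).
  by rewrite -Pa; ring.
apply: ler_wpM2l => //; rewrite lerD2r; rewrite -[X in _ <= X]mul1r; exact: ler_wpM2r.
Qed.

Lemma Phi_succ t : (t < T)%N ->
  Phi K eta (H t.+1) =
  hwZ eta (H t) * (K.+1 - hcnt (H t))%:R * expR (- eta * lossv zv (ys t)) +
  \sum_(n < MT | hact n (H t)) hw eta n (H t) * expR (- eta * lossv (gx n (xs t)) (ys t)).
Proof.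
move=> tT; have tT' := ltnW tT.
have sP : forall n, (hact n (H t.+1) && hact n (H t)) = hact n (H t).
  by move=> n; case A: (hact n (H t)); rewrite ?andbT ?andbF // (hact_mono (leqnSn t) A).
rewrite (PhiE tT) (bigID (fun n : 'I_MT => hact n (H t)) (fun n : 'I_MT => hact n (H t.+1)) (fun n : 'I_MT => hw eta n (H t.+1))) /=.
rewrite (eq_bigl (fun n : 'I_MT => hact n (H t))); last by move=> n; rewrite sP.
have E3 : \sum_(n < MT | hact n (H t.+1) && ~~ hact n (H t)) hw eta n (H t.+1) =
    hwZ eta (H t.+1) * \sum_(n < MT | hact n (H t.+1) && ~~ hact n (H t)) 1.
  rewrite mulr_sumr; apply: eq_bigr => n /andP[_ nA].
  rewrite mulr1 /hw /hwZ hist_succ hL_rcons hLZ_rcons hL_inact //.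
  by rewrite /hpred (negbTE nA).
have C1 := cnt_MT tT; have C0 := cnt_MT tT'.
rewrite (bigID (fun n : 'I_MT => hact n (H t)) (fun n : 'I_MT => hact n (H t.+1)) (fun n : 'I_MT => 1)) /= in C1.
rewrite (eq_bigl (fun n : 'I_MT => hact n (H t))) in C1; last by move=> n; rewrite sP.
have cK := cnt_leK tT.
rewrite E3 natrB ?(leq_trans cK) // C1 -C0.
rewrite [X in hwZ eta X]hist_succ hwZ_rcons.
have -> : \sum_(n < MT | hact n (H t)) hw eta n (H t.+1) =
    \sum_(n < MT | hact n (H t)) hw eta n (H t) * expR (- eta * lossv (gx n (xs t)) (ys t)).
  apply: eq_bigr => n A; rewrite hist_succ hw_rcons /=.
  by rewrite /hpred A.
have -> : (K.+1 - hcnt (H t))%:R = (K.+1)%:R - (hcnt (H t))%:R :> R.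
  by rewrite natrB // (leq_trans (cnt_leK tT')).
ring.
Qed.

Lemma Phi_step t : (t < T)%N ->
  Phi K eta (H t.+1) <=
  Phi K eta (H t) * expR (- eta * lossv (lpred K eta (H t) (xs t)) (ys t) + 16 * eta ^+ 2).
Proof.
move=> tT; have tT' := ltnW tT; have Y := validY tT.
rewrite (Phi_succ tT).
set bZ := hwZ eta (H t) * (K.+1 - hcnt (H t))%:R.
have bZ0 : 0 <= bZ by apply: mulr_ge0; [exact: ltW (expR_gt0 _)|exact: ler0n].
have lZ : 0 <= lossv zv (ys t) <= 4.
  by rewrite (lossv_zv Y) sqnorm_ge0 //= (le_trans (sqnorm_le1 Y)) // ler1n.
apply: le_trans (_ : bZ * (1 - eta * lossv zv (ys t) + 16 * eta ^+ 2) +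
   \sum_(n < MT | hact n (H t)) hw eta n (H t) *
      (1 - eta * lossv (gx n (xs t)) (ys t) + 16 * eta ^+ 2) <= _).
  apply: lerD; first exact: hedge1.
  apply: ler_sum => n _; apply: hedge1; first exact: ltW (expR_gt0 _).
  exact: lossv_gx.
have CV := convex_step tT.
set lh := lossv (lpred K eta (H t) (xs t)) (ys t).
set Ph := Phi K eta (H t).
have Ph0 : 0 <= Ph by exact: ltW (Phi_pos tT').
have PhE := PhiE tT'.
apply: le_trans (_ : Ph * (1 - eta * lh + 16 * eta ^+ 2) <= _); last first.
  by apply: ler_wpM2l => //; apply: le_trans (expR_ge1Dx _); lra.
have -> : \sum_(n < MT | hact n (H t)) hw eta n (H t) *
      (1 - eta * lossv (gx n (xs t)) (ys t) + 16 * eta ^+ 2) =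
    (\sum_(n < MT | hact n (H t)) hw eta n (H t)) * (1 + 16 * eta ^+ 2) -
    eta * \sum_(n < MT | hact n (H t)) hw eta n (H t) * lossv (gx n (xs t)) (ys t).
  rewrite mulr_suml mulr_sumr -sumrB; apply: eq_bigr => n _; ring.
rewrite -/Ph in CV; rewrite -/Ph in PhE.
have : eta * (Ph * lh) <= eta * (bZ * lossv zv (ys t) +
    \sum_(n < MT | hact n (H t)) hw eta n (H t) * lossv (gx n (xs t)) (ys t)).
  exact: ler_wpM2l.
rewrite PhE -/bZ => HH; clearbody bZ lh; nra.
Qed.

Lemma Phi0 : Phi K eta (H 0) = (K.+1)%:R.
Proof.
have hn : forall n, hact n (H 0) = false.
  by move=> n; rewrite /hact /hE /hist /= big_nil ler10.
rewrite /Phi /hcnt !big_pred0 // ?subn0 ?addr0 /hwZ /hLZ /hist /= ?big_nil ?mulr0 ?expR0 ?mul1r //.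
Qed.

Definition Lhat t := \sum_(s < t) lossv (lpred K eta (H s) (xs s)) (ys s).

Lemma Phi_tele t : (t <= T)%N ->
  Phi K eta (H t) <= (K.+1)%:R * expR (- eta * Lhat t + 16 * eta ^+ 2 * t%:R).
Proof.
elim: t => [|t IH] tT.
  by rewrite Phi0 /Lhat big_ord0 !mulr0 addr0 expR0 mulr1.
apply: le_trans (Phi_step tT) _.
apply: le_trans (_ : (K.+1)%:R * expR (- eta * Lhat t + 16 * eta ^+ 2 * t%:R) *
   expR (- eta * lossv (lpred K eta (H t) (xs t)) (ys t) + 16 * eta ^+ 2) <= _).
  by apply: ler_wpM2r; [exact: ltW (expR_gt0 _)|exact: IH (ltnW tT)].
rewrite -mulrA -expRD /Lhat big_ord_recr /= -natr1.
by rewrite le_eqVlt; apply/orP; left; apply/eqP; congr (_ * expR _); ring.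
Qed.

Lemma Phi_lower m : expR (- eta * hL m (H T)) <= Phi K eta (H T).
Proof.
rewrite (PhiE (leqnn T)).
case A: (hact m (H T)).
  have mM : (m < MT)%N by exact: MT_bound A.
  apply: le_trans (_ : \sum_(n < MT | hact n (H T)) hw eta n (H T) <= _).
    rewrite (bigD1 (Ordinal mM)) //= lerDl; apply: sumr_ge0 => j _.
    exact: ltW (expR_gt0 _).
  rewrite lerDr; apply: mulr_ge0; [exact: ltW (expR_gt0 _)|exact: ler0n].
rewrite hL_inact ?A //.
apply: le_trans (_ : hwZ eta (H T) * (K.+1 - hcnt (H T))%:R <= _).
  rewrite -[X in X <= _]mulr1; apply: ler_wpM2l; first exact: ltW (expR_gt0 _).
  exact: cZ_ge1.
rewrite lerDl; apply: sumr_ge0 => n _; exact: ltW (expR_gt0 _).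
Qed.

Lemma hL_class m : hL m (H T) <= class_loss (lift m) T xs ys + 2.
Proof.
rewrite hL_hist /class_loss.
have [B2 _] := @budget (fun r => en m (ys r)) T
  (fun s sT => introT andP (conj (en_ge0 m (ys s)) (en_le1 m (validY sT)))).
apply: le_trans (_ : \sum_(s < T) (lossv (lift m (xs s)) (ys s) +
   (if 1 <= \sum_(r < s) en m (ys r) then 0 else en m (ys s))) <= _).
  apply: ler_sum => s _; have sT := ltn_ord s.
  rewrite /hpred /hact hE_hist; case: ifP => A.
    by rewrite addr0 /gx ok_X ?lerr //; exact: validX.
  exact: zv_lift (validY sT).
by rewrite big_split /= lerD2l.
Qed.


Lemma regret_step m : 0 < eta ->
  Lhat T <= class_loss (lift m) T xs ys + 2 + ln ((K.+1)%:R) / eta + 16 * eta * T%:R.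
Proof.
move=> ep.
have H1 := le_trans (Phi_lower m) (Phi_tele (leqnn T)).
have Kp : (K.+1)%:R \in @Num.pos R by rewrite posrE ltr0Sn.
rewrite -[X in X * expR _](lnK Kp) -expRD ler_expR in H1.
have HL := hL_class m.
have HL' : eta * hL m (H T) <= eta * (class_loss (lift m) T xs ys + 2).
  exact: ler_wpM2l.
rewrite -(ler_pM2l ep).
have -> : eta * (class_loss (lift m) T xs ys + 2 + ln (K.+1)%:R / eta + 16 * eta * T%:R)
   = eta * (class_loss (lift m) T xs ys + 2) + ln (K.+1)%:R + 16 * eta ^+ 2 * T%:R.
  by field; rewrite gt_eqF.
nra.
Qed.
End Analysis.

Definition theL (K : nat) (eta : R) : learner R :=
  @Learner R _ unit (\d_ tt) (fun _ h x => lpred K eta h x)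
    (fun _ h x => lpred_inY K eta h x) (fun h x y => measurable_cst _).

End Aux.

Unset Implicit Arguments.

Theorem theorem6 (R : realType) :
  exists F : set (vec R -> vec R),
    (forall f, F f -> trace_class f) /\
    forall T : nat, (0 < T)%N ->
      ((T%:R / 2 : R)%:E <= Rad F T)%E /\
      (forall eps : R, 0 < eps ->
         exists L : learner R,
           (regret L T F <=
              (2 + 8 * Num.sqrt (T%:R * ln (2 * T%:R)) + eps)%:E)%E).
Proof.
exists (@FF R); split; first by move=> f [n ->]; exact: lift_tc.
move=> T T0; split; first exact: Rad_lb.
move=> eps eps0.
set c := Num.sqrt (T%:R * ln (2 * T%:R)).
have T1 : (1 : R) <= T%:R by rewrite ler1n.
have l2 : 0 < ln (2 * T%:R : R) by apply: ln_gt0; lra.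
have cp : 0 < c by rewrite sqrtr_gt0; apply: mulr_gt0 => //; lra.
have c2 : c ^+ 2 = T%:R * ln (2 * T%:R) by rewrite sqr_sqrtr //; apply: mulr_ge0 => //; lra.
set eta := c / (4 * T%:R).
have ep : 0 < eta by apply: divr_gt0 => //; lra.
exists (theL T eta).
rewrite /regret; apply: ge_ereal_sup => z [[xs ys] Hv <-].
set Lh := Lhat xs ys T eta T.
have -> : (fun w => (@learner_loss R (theL T eta) T xs ys w)%:E) = cst Lh%:E.
  by apply: funext => w.
rewrite integral_cst // /= diracT mule1.
set B := 2 + 8 * c + eps.
have KEY : forall m, Lh - B <= class_loss (lift m) T xs ys.
  move=> m; have := @regret_step R T xs ys Hv T eta (leqnn T) (ltW ep) m ep.
  rewrite -/Lh.
  have lnT : ln ((T.+1)%:R : R) <= ln (2 * T%:R).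
    rewrite ler_ln ?posrE ?ltr0Sn //; last lra.
    by rewrite -natr1; lra.
  have E1 : 16 * eta * T%:R = 4 * c by rewrite /eta; field; lra.
  have E2 : ln ((T.+1)%:R : R) / eta <= 4 * c.
    rewrite ler_pdivrMr // /eta.
    have -> : 4 * c * (c / (4 * T%:R)) = c ^+ 2 / T%:R by field; lra.
    rewrite c2 mulrAC divff ?mul1r //; lra.
  rewrite E1 => H; rewrite /B; lra.
have Bf : B%:E \is a fin_num by [].
rewrite lee_subel_addr //.
have Hinf : ((Lh - B)%:E <= ereal_inf [set (class_loss f T xs ys)%:E | f in @FF R])%E.
  by apply: le_ereal_inf_tmp => _ [f [m ->] <-]; rewrite lee_fin.
apply: le_trans (leeD2l _ Hinf).
by rewrite -EFinD lee_fin; lra.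
Qed.
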